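(* Let $n\ge2$ and let $\mathsf{b}$ be a $C_n$-bivaluation. Then the map $\nu$ from formulas to $B_n$ given by $\nu(\alpha)=(\mathsf{b}(\alpha),\mathsf{b}(\neg\alpha),\mathsf{b}(\alpha^1),\dots,\mathsf{b}(\alpha^{n-1}))$ is a valuation belonging to $\mathcal{F}_{C_n}$, and for every formula $\alpha$, $\mathsf{b}(\alpha)=1$ iff $\nu(\alpha)\in D_n$.
   Context: $\Sigma$ has unary $\neg$ and binary $\wedge,\vee,\to$; formulas over a denumerable set of variables; $\alpha^0=\alpha$, $\alpha^{k+1}=\neg(\alpha^k\wedge\neg\alpha^k)$. A $C_n$-bivaluation is a map $\mathsf{b}$ from formulas to $\{0,1\}$ such that: (B1) $\mathsf{b}(\alpha\wedge\beta)=1$ iff $\mathsf{b}(\alpha)=\mathsf{b}(\beta)=1$; (B2) $\mathsf{b}(\alpha\vee\beta)=1$ iff $\mathsf{b}(\alpha)=1$ or $\mathsf{b}(\beta)=1$; (B3) $\mathsf{b}(\alpha\to\beta)=1$ iff $\mathsf{b}(\alpha)=0$ or $\mathsf{b}(\beta)=1$; (B4) $\mathsf{b}(\alpha)=0$ implies $\mathsf{b}(\neg\alpha)=1$; (B5) $\mathsf{b}(\neg\neg\alpha)=1$ implies $\mathsf{b}(\alpha)=1$; (B6)$_n$ $\mathsf{b}(\alpha^{n-1})=\mathsf{b}(\neg(\alpha^{n-1}))$ iff $\mathsf{b}(\alpha^n)=0$; (B7) $\mathsf{b}(\alpha)=\mathsf{b}(\neg\alpha)$ iff $\mathsf{b}(\neg(\alpha^1))=1$;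 (B8) if $\mathsf{b}(\alpha)\ne\mathsf{b}(\neg\alpha)$ and $\mathsf{b}(\beta)\ne\mathsf{b}(\neg\beta)$ then $\mathsf{b}(\alpha\#\beta)\ne\mathsf{b}(\neg(\alpha\#\beta))$ for $\#\in\{\wedge,\vee,\to\}$. Fix $n\ge2$. $B_n=\{z\in\{0,1\}^{n+1}:(z_1\wedge\dots\wedge z_k)\vee z_{k+1}=1\text{ for all }1\le k\le n\}$, with elements $T_n=(1,0,1,\dots,1)$, $t^n_i$ ($0\le i\le n-2$) having $z_1=z_2=1$ and a single $0$ at coordinate $i+3$, $t^n_{n-1}=(1,\dots,1)$, $F_n=(0,1,\dots,1)$. $D_n=\{z:z_1=1\}$, $Boo_n=\{T_n,F_n\}$, $I_n=B_n\setminus Boo_n$. $\mathcal{A}_{C_n}$ on $B_n$: $\tilde\neg z=\{w\in B_n:w_1=z_2,\ w_2\le z_1\}$; for $\#\in\{\wedge,\vee,\to\}$, $z\tilde\#w=\{u\in Boo_n:u_1=z_1\#w_1\}$ if $z,w\in Boo_n$, else $\{u\in B_n:u_1=z_1\#w_1\}$. A valuation is $\nu$ with $\nu(\neg\alpha)\in\tilde\neg\nu(\alpha)$, $\nu(\alpha\#\beta)\in\nu(\alpha)\tilde\#\nu(\beta)$. $\mathcal{F}_{C_n}$: valuations with $\nu(\alpha)=t^n_0\Rightarrow\nu(\alpha\wedge\neg\alpha)=T_n$, and for $1\le k\le n-1$, $\nu(\alpha)=t^n_k\Rightarrow(\nu(\alpha\wedge\neg\alpha)\in I_n$ and $\nu(\alpha^1)=t^n_{k-1})$.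 *)

(* Defs.v *)
From mathcomp Require Import all_boot.
Set Implicit Arguments. Unset Strict Implicit. Unset Printing Implicit Defensive.

Inductive formula : Type :=
  | Var of nat
  | Neg of formula
  | And of formula & formula
  | Or  of formula & formula
  | Imp of formula & formula.

Fixpoint cons_pow (a : formula) (k : nat) : formula :=
  match k with
  | 0 => a
  | k'.+1 => Neg (And (cons_pow a k') (Neg (cons_pow a k')))
  end.

Definition bivaluation (n : nat) (b : formula -> bool) : Prop :=
  (forall a c, b (And a c) = b a && b c) /\
  (forall a c, b (Or a c) = b a || b c) /\
  (forall a c, b (Imp a c) = ~~ b a || b c) /\
  (forall a, b a = false -> b (Neg a) = true) /\
  (forall a, b (Neg (Neg a)) = true -> b a = true) /\
  (forall a, b (cons_pow a n.-1) = b (Neg (cons_pow a n.-1))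
             <-> b (cons_pow a n) = false) /\
  (forall a, b a = b (Neg a) <-> b (Neg (cons_pow a 1)) = true) /\
  (forall a c, b a <> b (Neg a) -> b c <> b (Neg c) ->
     b (And a c) <> b (Neg (And a c)) /\
     b (Or a c) <> b (Neg (Or a c)) /\
     b (Imp a c) <> b (Neg (Imp a c))).

(** Elements of {0,1}^(n+1) are (n+1)-tuples of booleans; coordinates are
    numbered 1..n+1 as in the paper. *)
Definition coord (n : nat) (z : n.+1.-tuple bool) (i : nat) : bool :=
  nth false z i.-1.

Definition mk (n : nat) (f : nat -> bool) : n.+1.-tuple bool :=
  [tuple f (val i).+1 | i < n.+1].

(** B_n : (z_1 ∧ ... ∧ z_k) ∨ z_(k+1) = 1 for all 1 <= k <= n. *)
Definition inB (n : nat) (z : n.+1.-tuple bool) : bool :=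
  [forall k : 'I_n, all (coord z) (iota 1 k.+1) || coord z k.+2].

Definition Tn (n : nat) : n.+1.-tuple bool := mk n (fun j => j != 2).
Definition Fn (n : nat) : n.+1.-tuple bool := mk n (fun j => j != 1).
Definition tn (n i : nat) : n.+1.-tuple bool :=
  if i < n.-1 then mk n (fun j => j != i.+3) else mk n (fun _ => true).

Definition inD (n : nat) (z : n.+1.-tuple bool) : bool := coord z 1.
Definition inBoo (n : nat) (z : n.+1.-tuple bool) : bool := (z == Tn n) || (z == Fn n).
Definition inI (n : nat) (z : n.+1.-tuple bool) : bool := inB z && ~~ inBoo z.

(** Multioperations of A_{C_n}, given as membership predicates. *)
Definition neg_mem (n : nat) (z w : n.+1.-tuple bool) : bool :=
  [&& inB w, coord w 1 == coord z 2 & coord w 2 <= coord z 1].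

Definition bin_mem (n : nat) (op : bool -> bool -> bool)
    (z w u : n.+1.-tuple bool) : bool :=
  if inBoo z && inBoo w then inBoo u && (coord u 1 == op (coord z 1) (coord w 1))
  else inB u && (coord u 1 == op (coord z 1) (coord w 1)).

Definition valuation (n : nat) (nu : formula -> n.+1.-tuple bool) : Prop :=
  (forall a, inB (nu a)) /\
  (forall a, neg_mem (nu a) (nu (Neg a))) /\
  (forall a c, bin_mem andb (nu a) (nu c) (nu (And a c))) /\
  (forall a c, bin_mem orb (nu a) (nu c) (nu (Or a c))) /\
  (forall a c, bin_mem implb (nu a) (nu c) (nu (Imp a c))).

Definition inF (n : nat) (nu : formula -> n.+1.-tuple bool) : Prop :=
  valuation nu /\
  (forall a, nu a = tn n 0 -> nu (And a (Neg a)) = Tn n) /\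
  (forall a k, 1 <= k <= n.-1 -> nu a = tn n k ->
     inI (nu (And a (Neg a))) /\ nu (cons_pow a 1) = tn n k.-1).

Definition nu_of (n : nat) (b : formula -> bool) (a : formula) : n.+1.-tuple bool :=
  mk n (fun j => if j == 1 then b a
                 else if j == 2 then b (Neg a)
                 else b (cons_pow a (j - 2))).

(* Main.v *)
Require Import Defs.
From mathcomp Require Import all_boot.
From mathcomp Require Import zify.

Lemma nth_mk n (f : nat -> bool) i :
  nth false (mk n f) i = if i < n.+1 then f i.+1 else false.
Proof.
case: ifP => hi.
  have -> : i = val (Ordinal hi) by [].
  by rewrite -(tnth_nth false) /mk tnth_mktuple.
by rewrite nth_default // size_tuple leqNgt hi.
Qed.

Lemma coord_mk n (f : nat -> bool) i : 1 <= i <= n.+1 -> coord (mk n f) i = f i.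
Proof.
move=> /andP[h1 h2]; rewrite /coord nth_mk.
by case: i h1 h2 => [//|i] _ h2 /=; rewrite h2.
Qed.

Lemma eq_mk n (f g : nat -> bool) :
  (forall j, 1 <= j <= n.+1 -> f j = g j) -> mk n f = mk n g.
Proof. move=> H; apply: eq_mktuple => i; apply: H; exact: ltn_ord. Qed.

Lemma coord_nu n b a j : 1 <= j <= n.+1 ->
  coord (nu_of n b a) j = if j == 1 then b a else if j == 2 then b (Neg a)
                 else b (cons_pow a (j - 2)).
Proof. exact: coord_mk. Qed.

Lemma coord_tn n k j : 1 <= j <= n.+1 ->
  coord (tn n k) j = if k < n.-1 then j != k.+3 else true.
Proof. move=> h; rewrite /tn; case: ifP => _; by rewrite coord_mk. Qed.

Lemma cons_pow_add a p m : cons_pow (cons_pow a p) m = cons_pow a (m + p).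
Proof. by elim: m => //= m ->. Qed.

Section S.
Variable n : nat.
Variable b : formula -> bool.
Hypothesis hb : bivaluation n b.

Lemma F0 x : b x || b (Neg x).
Proof. have [_ [_ [_ [B4 _]]]] := hb. by case E: (b x) => //=; rewrite B4. Qed.

Lemma F1 a j : ~~ (b (cons_pow a j) && b (Neg (cons_pow a j))) -> b (cons_pow a j.+1).
Proof.
have [B1 [_ [_ [B4 _]]]] := hb. move=> h /=; apply: B4; rewrite B1; exact: negbTE.
Qed.

Lemma F2 a j : (b (cons_pow a j) == b (Neg (cons_pow a j))) = b (Neg (cons_pow a j.+1)).
Proof.
have [_ [_ [_ [_ [_ [_ [B7 _]]]]]]] := hb.
have [h1 h2] := B7 (cons_pow a j); simpl in h1, h2.
apply/idP/idP => [/eqP/h1 -> //| /h2 /eqP //].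
Qed.

Lemma step a p : b (cons_pow a p) != b (Neg (cons_pow a p)) ->
  b (cons_pow a p.+1) && ~~ b (Neg (cons_pow a p.+1)).
Proof.
move=> d; rewrite F1; last by move: d; case: (b _); case: (b _).
by rewrite -F2 d.
Qed.

Lemma diff_after a p : b (cons_pow a p) != b (Neg (cons_pow a p)) ->
  forall q, p < q -> b (cons_pow a q) && ~~ b (Neg (cons_pow a q)).
Proof.
move=> d; elim=> [//|q IH]; rewrite ltnS leq_eqVlt => /orP[/eqP <-|h].
  exact: step.
apply: step; move: (IH h); case: (b _); case: (b _) => //.
Qed.

Lemma diff_s a p q : b (cons_pow a p) != b (Neg (cons_pow a p)) -> p < q ->
  b (cons_pow a q) = true.
Proof. by move=> d h; case/andP: (@diff_after a p d q h). Qed.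

Hypothesis hn : 2 <= n.

Lemma nu_T a : b a = true -> b (Neg a) = false -> nu_of n b a = Tn n.
Proof.
move=> h1 h2; apply: eq_mk => j hj /=.
case: j hj => [|[|[|j]]] hj //=; rewrite ?h1 ?h2 //.
change (b (cons_pow a j.+1) = true); apply: (@diff_s a 0); first by rewrite /= h1 h2. lia.
Qed.

Lemma nu_F a : b a = false -> b (Neg a) = true -> nu_of n b a = Fn n.
Proof.
move=> h1 h2; apply: eq_mk => j hj /=.
case: j hj => [|[|[|j]]] hj //=; rewrite ?h1 ?h2 //.
change (b (cons_pow a j.+1) = true); apply: (@diff_s a 0); first by rewrite /= h1 h2. lia.
Qed.

Lemma boo_nu a : inBoo (nu_of n b a) = (b a != b (Neg a)).
Proof.
apply/idP/idP.
  have e1 : 1 <= 1 <= n.+1 by lia.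
  have e2 : 1 <= 2 <= n.+1 by lia.
  case/orP => /eqP E.
    have := congr1 (fun z => coord z 1) E; have := congr1 (fun z => coord z 2) E.
    rewrite /= /Tn !coord_nu // !coord_mk //= => -> ->. done.
  have := congr1 (fun z => coord z 1) E; have := congr1 (fun z => coord z 2) E.
  rewrite /= /Fn !coord_nu // !coord_mk //= => -> ->. done.
have := F0 a; case E1: (b a); case E2: (b (Neg a)) => //= _ _.
  by rewrite /inBoo (@nu_T a E1 E2) eqxx.
by rewrite /inBoo (@nu_F a E1 E2) eqxx orbT.
Qed.

Lemma inB_of (z : n.+1.-tuple bool) :
  (forall i j, 1 <= i -> i < j -> j <= n.+1 -> coord z i || coord z j) -> inB z.
Proof.
move=> H; apply/forallP => k.
case E: (coord z k.+2); first by rewrite orbT.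
rewrite orbF; apply/allP => i; rewrite mem_iota => /andP[h1 h2].
have := H i k.+2 h1; rewrite E orbF; apply; have := ltn_ord k; lia.
Qed.

Lemma inB_nu a : inB (nu_of n b a).
Proof.
apply: inB_of => i j h1 hij hj; rewrite !coord_nu; try lia.
have j1 : (j == 1) = false by lia.
rewrite j1.
case: (eqVneq i 1) => [Ei|i1].
  case E: (b a) => //=.
  have E2 : b (Neg a) = true by have := F0 a; rewrite E.
  case: (eqVneq j 2) => [//|j2].
  apply: (@diff_s a 0); first by rewrite /= E E2. lia.
case: (eqVneq i 2) => [Ei|i2].
  case E: (b (Neg a)) => //=.
  have E2 : b a = true by have := F0 a; rewrite E orbF.
  have j2 : (j == 2) = false by lia.
  rewrite j2; apply: (@diff_s a 0); first by rewrite /= E E2. lia.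
have j2 : (j == 2) = false by lia.
rewrite j2.
case E: (b (cons_pow a (i - 2))) => //=.
have E2 : b (Neg (cons_pow a (i - 2))) = true by have := F0 (cons_pow a (i - 2)); rewrite E.
apply: (@diff_s a (i - 2)); first by rewrite E E2. lia.
Qed.

Lemma bin_nu (K : formula -> formula -> formula) op :
  (forall a c, b (K a c) = op (b a) (b c)) ->
  (forall a c, b a <> b (Neg a) -> b c <> b (Neg c) -> b (K a c) <> b (Neg (K a c))) ->
  forall a c, bin_mem op (nu_of n b a) (nu_of n b c) (nu_of n b (K a c)).
Proof.
move=> Hop H8 a c; rewrite /bin_mem !boo_nu !coord_nu /=; try lia.
rewrite Hop eqxx !andbT.
case: ifP => [/andP[/eqP h1 /eqP h2]|_]; last exact: inB_nu.
by rewrite -Hop; apply/eqP; apply: H8.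
Qed.

End S.

Theorem mainTheorem12 (n : nat) (b : formula -> bool) :
  2 <= n -> bivaluation n b ->
  inF (nu_of n b) /\ (forall a, b a = true <-> inD (nu_of n b a)).
Proof.
move=> hn hb.
have [B1 [B2 [B3 [B4 [B5 [B6 [B7 B8]]]]]]] := hb.
split; last first.
  move=> a; rewrite /inD coord_nu /=; [done | lia].
split; [split; [|split; [|split; [|split]]]|split].
- exact: inB_nu.
- move=> a; rewrite /neg_mem inB_nu // !coord_nu /=; try lia.
  rewrite eqxx /=; case E: (b (Neg (Neg a))) => //; by rewrite (B5 _ E).
- apply: bin_nu => // a c h1 h2; by case: (B8 a c h1 h2).
- apply: bin_nu => // a c h1 h2; by case: (B8 a c h1 h2) => _ [].
- apply: bin_nu => //; first by move=> a c; rewrite B3; case: (b a).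
  move=> a c h1 h2; by case: (B8 a c h1 h2) => _ [].
- move=> a E.
  have c1 := congr1 (fun z => coord z 1) E.
  have c2 := congr1 (fun z => coord z 2) E.
  have c3 := congr1 (fun z => coord z 3) E.
  move: c1 c2 c3; rewrite /= !coord_nu ?coord_tn /=; try lia.
  have -> : 0 < n.-1 by lia.
  move=> c1 c2 c3.
  apply: nu_T => //; first by rewrite B1 c1 c2.
- move=> a k hk E.
  have cf : forall j, 1 <= j <= n.+1 -> coord (nu_of n b a) j = coord (tn n k) j
    by move=> j _; rewrite E.
  have c1 := cf 1 ltac:(lia). have c2 := cf 2 ltac:(lia).
  rewrite !coord_nu ?coord_tn /= in c1 c2; try lia.
  rewrite if_same in c1 c2.
  have cs : forall m, 1 <= m <= n.-1 ->
      b (cons_pow a m) = if k < n.-1 then m != k.+1 else true.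
    move=> m hm; have := cf m.+2 ltac:(lia).
    rewrite coord_nu ?coord_tn /=; try lia.
    have -> : (m.+2 == 2) = false by lia.
    have -> : m.+2 - 2 = m by lia.
    by rewrite !eqSS => ->.
  have s1 : b (cons_pow a 1) = true.
    rewrite cs; last lia. by case: ifP => //; lia.
  split.
    rewrite /inI inB_nu // boo_nu // B1 c1 c2 /=.
    by move: s1 => /= ->.
  have t1 : b (Neg (cons_pow a 1)) = true by rewrite -(@F2 n b hb a 0) /= c1 c2.
  have sn : b (cons_pow a n) = (k < n.-1).
    case hk2: (k < n.-1); rewrite hk2 in cs.
      have sk : b (cons_pow a k.+1) = false by rewrite cs ?eqxx //; lia.
      have tk : b (Neg (cons_pow a k.+1)) = true.
        by have := @F0 n b hb (cons_pow a k.+1); rewrite sk.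
      apply: (@diff_s n b hb a k.+1); last lia.
      by rewrite sk tk.
    have sm : forall m, m <= n.-1 -> b (cons_pow a m) = true.
      by case=> [|m] hm; [exact: c1 | rewrite cs //; lia].
    have ht : forall m, m <= n.-1 -> b (Neg (cons_pow a m)) = true.
      elim=> [//|m IH] hm; rewrite -(@F2 n b hb) IH; last lia.
      by rewrite sm //; lia.
    apply/(proj1 (B6 a)).
    by rewrite ht // sm.
  rewrite /tn; have -> : k.-1 < n.-1 by lia.
  apply: eq_mk => -[|[|[|j]]] hj //.
  have -> : j.+3 - 2 = j.+1 by lia.
  change (b (cons_pow (cons_pow a 1) j.+1) = (j.+3 != k.-1.+3)).
  rewrite cons_pow_add addn1 !eqSS.
  case: (ltnP j.+2 n) => hj2.
    rewrite cs; last lia.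
    case: ifP => hk2; apply/idP/idP; lia.
  have -> : j.+2 = n by lia.
  rewrite sn; apply/idP/idP; lia.
Qed.
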